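(* Let $K_n$ denote the number of fully heterochronous ranked tree shapes with $n$ leaves. Then $K_1=K_2=1$ and, for every $n\ge 3$, $$K_n=\frac12\sum_{\ell=1}^{n-1}\binom{2n-2}{2\ell-1}K_\ell K_{n-\ell}.$$
   Context: A fully heterochronous ranked tree shape with $n$ leaves is a rooted full binary tree (every node has out-degree $0$ or $2$), without leaf labels, with $n$ leaves, together with a total ordering of all $2n-1$ nodes (leaves included) such that nodes appear in increasing order along every path from the root to a leaf. Two such objects are considered the same if there is an isomorphism of rooted trees preserving the total order. *)

(* Defs.v *)
From mathcomp Require Import all_boot.
Set Implicit Arguments. Unset Strict Implicit. Unset Printing Implicit Defensive.

(* The children order of [RNode k l r] carries no
   meaning: it is quotiented out by [rtiso] below.  The label of a node is
   its rank in the total order of all nodes. *)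
Inductive rtree : Type :=
| RLeaf : nat -> rtree
| RNode : nat -> rtree -> rtree -> rtree.

Definition rlabel (t : rtree) : nat :=
  match t with RLeaf k => k | RNode k _ _ => k end.

Fixpoint rlabels (t : rtree) : seq nat :=
  match t with
  | RLeaf k => [:: k]
  | RNode k l r => k :: (rlabels l ++ rlabels r)
  end.

Fixpoint rleaves (t : rtree) : nat :=
  match t with
  | RLeaf _ => 1
  | RNode _ l r => rleaves l + rleaves r
  end.

Fixpoint rincreasing (t : rtree) : bool :=
  match t with
  | RLeaf _ => true
  | RNode k l r => [&& k < rlabel l, k < rlabel r, rincreasing l & rincreasing r]
  end.

Definition fh_ranked (n : nat) (t : rtree) : Prop :=
  [/\ rleaves t = n,
      perm_eq (rlabels t) (iota 0 (2 * n - 1)) &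
      rincreasing t].

Inductive rtiso : rtree -> rtree -> Prop :=
| rtiso_leaf k : rtiso (RLeaf k) (RLeaf k)
| rtiso_keep k l r l' r' :
    rtiso l l' -> rtiso r r' -> rtiso (RNode k l r) (RNode k l' r')
| rtiso_swap k l r l' r' :
    rtiso l l' -> rtiso r r' -> rtiso (RNode k l r) (RNode k r' l').

(* [fh_count n k]: there are exactly k isomorphism classes of fully
   heterochronous ranked tree shapes with n leaves, witnessed by a complete
   system of k pairwise non-isomorphic representatives. *)
Definition fh_count (n k : nat) : Prop :=
  exists reps : seq rtree,
  [/\ size reps = k,
      forall i, i < k -> fh_ranked n (nth (RLeaf 0) reps i),
      forall i j, i < k -> j < k ->
        rtiso (nth (RLeaf 0) reps i) (nth (RLeaf 0) reps j) -> i = j &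
      forall t, fh_ranked n t -> exists2 i, i < k & rtiso t (nth (RLeaf 0) reps i)].

(* Main.v *)
From HB Require Import structures.
Require Import Defs.
From mathcomp Require Import all_boot zify.

Fixpoint rtree_eqb (t u : rtree) : bool :=
  match t, u with
  | RLeaf a, RLeaf b => a == b
  | RNode a l r, RNode b l' r' => [&& a == b, rtree_eqb l l' & rtree_eqb r r']
  | _, _ => false
  end.

Lemma rtree_eqP : Equality.axiom rtree_eqb.
Proof.
elim=> [a|a l IHl r IHr] [b|b l' r'] /=; try by constructor.
  by apply: (iffP eqP) => [->|[]].
apply: (iffP and3P) => [[/eqP -> /IHl -> /IHr ->] //|[-> <- <-]].
by split => //; [apply/IHl | apply/IHr].
Qed.

HB.instance Definition _ := hasDecEq.Build rtree rtree_eqP.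

Fixpoint canon_ok (t : rtree) : bool :=
  match t with
  | RLeaf _ => true
  | RNode _ l r => [&& rlabel l < rlabel r, canon_ok l & canon_ok r]
  end.

Fixpoint norm (t : rtree) : rtree :=
  match t with
  | RLeaf k => RLeaf k
  | RNode k l r =>
      if rlabel (norm l) < rlabel (norm r) then RNode k (norm l) (norm r)
      else RNode k (norm r) (norm l)
  end.

Lemma rlabel_norm t : rlabel (norm t) = rlabel t.
Proof. by case: t => //= k l r; case: ifP. Qed.

Lemma mem_rlabel t : rlabel t \in rlabels t.
Proof. by case: t => [k|k l r]; rewrite /= inE eqxx. Qed.

Lemma rinc_min t z : rincreasing t -> z \in rlabels t -> rlabel t <= z.
Proof.
elim: t => [k _|k l IHl r IHr /and4P[kl kr il ir]] /=; first by rewrite inE => /eqP ->.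
rewrite inE mem_cat => /orP[/eqP -> //|/orP[zl|zr]].
  exact: leq_trans (ltnW kl) (IHl il zl).
exact: leq_trans (ltnW kr) (IHr ir zr).
Qed.

Lemma norm_iso t : rtiso t (norm t).
Proof.
elim: t => [k|k l IHl r IHr] /=; first by constructor.
by case: ifP => _; [apply: rtiso_keep | apply: rtiso_swap].
Qed.

Lemma norm_labels t : perm_eq (rlabels (norm t)) (rlabels t).
Proof.
elim: t => [k|k l IHl r IHr] //=.
case: ifP => _ /=; rewrite perm_cons; first exact: perm_cat.
by rewrite perm_catC; apply: perm_cat.
Qed.

Lemma norm_inc t : rincreasing t -> rincreasing (norm t).
Proof.
elim: t => [k|k l IHl r IHr] //= /and4P[kl kr il ir].
by case: ifP => _ /=; rewrite !rlabel_norm kl kr IHl ?IHr.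
Qed.

Lemma norm_canon t : uniq (rlabels t) -> canon_ok (norm t).
Proof.
elim: t => [k|k l IHl r IHr] //=.
rewrite cat_uniq => /andP[_ /and3P[ul dis ur]].
have ne : rlabel (norm l) != rlabel (norm r).
  rewrite !rlabel_norm; apply/negP => /eqP e.
  by move/hasP: dis; apply; exists (rlabel r); rewrite ?mem_rlabel // -e mem_rlabel.
case: ifP => h /=; first by rewrite h IHl ?IHr.
rewrite IHl // IHr // andbT andbT ltn_neqAle eq_sym ne /=.
by rewrite leqNgt h.
Qed.

Lemma iso_label t u : rtiso t u -> rlabel t = rlabel u.
Proof. by case. Qed.

Lemma canon_iso_eq t u : rtiso t u -> canon_ok t -> canon_ok u -> t = u.
Proof.
elim=> [k|k l r l' r' hl IHl hr IHr|k l r l' r' hl IHl hr IHr] //=.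
  by move=> /and3P[_ cl cr] /and3P[_ cl' cr']; rewrite (IHl cl cl') (IHr cr cr').
move=> /and3P[lr _ _] /and3P[rl _ _].
move: rl; rewrite -(iso_label _ _ hl) -(iso_label _ _ hr) => rl.
by have := ltn_trans lr rl; rewrite ltnn.
Qed.

Fixpoint allbits (k : nat) : seq bitseq :=
  match k with
  | 0 => [:: [::]]
  | k'.+1 => map (cons true) (allbits k') ++ map (cons false) (allbits k')
  end.

Fixpoint gen (m : nat) (s : seq nat) {struct m} : seq rtree :=
  match m with
  | 0 => [::]
  | m'.+1 =>
    match s with
    | [::] => [::]
    | [:: x] => [:: RLeaf x]
    | x :: ((_ :: r) as rest) =>
        flatten [seq flatten [seq [seq RNode x l t | t <- gen m' (mask (map negb b) rest)]
                              | l <- gen m' (mask b rest)]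
                | b <- map (cons true) (allbits (size r))]
    end
  end.

Definition gen' s := gen (size s) s.
Definition F k := size (gen' (iota 0 k)).
Definition K n := F (2 * n - 1).

Lemma K1 : K 1 = 1. Proof. reflexivity. Qed.
Lemma K2 : K 2 = 1. Proof. reflexivity. Qed.


Lemma mem_cons_map (c d : bool) b (L : seq bitseq) :
  (c :: b \in map (cons d) L) = (c == d) && (b \in L).
Proof.
apply/mapP/andP => [[x xL [-> ->]]|[/eqP -> bL]]; first by split.
by exists b.
Qed.

Lemma mem_allbits k b : (b \in allbits k) = (size b == k).
Proof.
elim: k b => [|k IH] [|c b] //=; rewrite ?mem_seq1 // mem_cat.
  by apply/negbTE/negP => /orP[] /mapP[x _].
by rewrite !mem_cons_map IH eqSS; case: c; rewrite /= ?orbF.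
Qed.

Lemma uniq_allbits k : uniq (allbits k).
Proof.
elim: k => [|k IH] //=; rewrite cat_uniq !map_inj_uniq // ?IH; try by move=> x y [].
rewrite andbT /=; apply/hasPn => x /mapP[y _ ->]; by rewrite mem_cons_map.
Qed.

Lemma size_mask_same b (s s' : seq nat) : size s = size s' -> size (mask b s) = size (mask b s').
Proof.
elim: s b s' => [|x s IH] [|c b] [|x' s'] //= [e]; case: c => /=; by rewrite (IH _ s').
Qed.

Lemma size_gen_node m x y r :
  size (gen m.+1 [:: x, y & r]) =
  sumn [seq size (gen m (mask b (y :: r))) * size (gen m (mask (map negb b) (y :: r)))
       | b <- map (cons true) (allbits (size r))].
Proof.
rewrite /= size_flatten /shape -map_comp; congr sumn; apply: eq_map => b /=.
by rewrite size_allpairs.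
Qed.

Lemma size_gen_eq m s s' : size s = size s' -> size (gen m s) = size (gen m s').
Proof.
elim: m s s' => [|m IH] // [|x [|y r]] [|x' [|y' r']] //= [] // e.
rewrite -/(gen m.+1 [:: x, y & r]) -/(gen m.+1 [:: x', y' & r']) !size_gen_node e.
congr sumn; apply: eq_map => b.
rewrite (IH _ (mask b (y' :: r'))); last by apply: size_mask_same; rewrite /= e.
rewrite (IH (mask (map negb b) (y :: r)) (mask (map negb b) (y' :: r'))) //.
by apply: size_mask_same; rewrite /= e.
Qed.

Lemma size_mask_le b (s : seq nat) : size (mask b s) <= size s.
Proof. exact/size_subseq/mask_subseq. Qed.

Lemma gen_fuel m m' s : size s <= m -> size s <= m' -> gen m s = gen m' s.
Proof.
elim: m m' s => [|m IH] [|m'] [|x [|y r]] //= Hm Hm'.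
congr flatten; apply: eq_map => b; congr flatten.
rewrite (IH m' (mask b (y :: r))) ?(leq_trans (size_mask_le _ _)) //.
apply: eq_map => l.
by rewrite (IH m') ?(leq_trans (size_mask_le _ _)).
Qed.

Lemma gen'_eq m s : size s <= m -> gen m s = gen' s.
Proof. by move=> h; rewrite /gen' (@gen_fuel m (size s) s h). Qed.

Lemma sizeF s : size (gen' s) = F (size s).
Proof. by rewrite /F /gen' (@size_gen_eq (size s) s (iota 0 (size s))) ?size_iota. Qed.

Lemma F_rec k : F k.+2 = \sum_(b <- allbits k) F (count id b).+1 * F (k - count id b).
Proof.
rewrite {1}/F {1}/gen' size_iota -/(iota 0 k.+2) -[iota 0 k.+2]/(0 :: 1 :: iota 2 k).
rewrite size_gen_node sumnE big_map.
rewrite big_map size_iota big_seq [RHS]big_seq; apply: eq_bigr => b.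
rewrite mem_allbits => /eqP sb.
have hm : forall c, size (mask c (1 :: iota 2 k)) <= k.+1.
  by move=> c; apply: leq_trans (size_mask_le _ _) _; rewrite /= size_iota.
rewrite !gen'_eq // !sizeF.
rewrite !size_mask ?size_map /= ?sb ?size_iota //.
have cN : forall c : bitseq, count id (map negb c) = size c - count id c.
  by move=> c; rewrite count_map -(count_predC id c) addKn.
by rewrite cN sb.
Qed.

Lemma F0 : F 0 = 0. Proof. by []. Qed.

Lemma F_even k : ~~ odd k -> F k = 0.
Proof.
elim/ltn_ind: k => [[|[|k]]] // IH /= ok.
rewrite F_rec big_seq big1 // => b; rewrite mem_allbits => /eqP sb.
have ck : count id b <= k by rewrite -sb count_size.
case oc: (odd (count id b)).
  by rewrite IH ?mul0n //= ?oc // ltnS.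
rewrite (IH (k - count id b)) ?muln0 //; first by rewrite ltnS (leq_trans (leq_subr _ _)) .
by rewrite oddB // oc addbF; move: ok; rewrite !negbK.
Qed.

Lemma sum_neg k (h : bitseq -> nat) :
  \sum_(b <- allbits k) h (map negb b) = \sum_(b <- allbits k) h b.
Proof.
elim: k h => [|k IH] h; first by rewrite !big_seq1.
rewrite /= !big_cat !big_map /= addnC.
by rewrite (IH (fun b => h (false :: b))) (IH (fun b => h (true :: b))).
Qed.

Lemma sum_binom k (f : nat -> nat) :
  \sum_(b <- allbits k) f (count id b) = \sum_(0 <= j < k.+1) 'C(k, j) * f j.
Proof.
elim: k f => [|k IH] f; first by rewrite big_seq1 big_nat1 mul1n.
rewrite /= big_cat !big_map /=.
rewrite (IH (fun c => f (1 + c))) (IH f).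
rewrite [in RHS]big_nat_recl // bin0 mul1n.
under [in RHS]eq_bigr => i _ do rewrite binS mulnDl.
rewrite big_split /=.
rewrite [X in _ = _ + (X + _)]big_nat_recr //= bin_small // mul0n addn0.
rewrite [X in _ + X = _]big_nat_recl // bin0 mul1n.
rewrite addnC -addnA; congr (_ + (_ + _)).
Qed.

Lemma sum_odd N (G : nat -> nat) : (forall i, G (2 * i) = 0) ->
  \sum_(0 <= j < (2 * N).+1) G j = \sum_(1 <= l < N.+1) G (2 * l - 1).
Proof.
move=> G0; elim: N => [|N IH]; first by rewrite big_nat1 big_geq // (G0 0).
have -> : (2 * N.+1).+1 = (2 * N).+3 by lia.
rewrite big_nat_recr // big_nat_recr //= IH [RHS]big_nat_recr //=.
have -> : (2 * N).+2 = 2 * N.+1 by lia.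
by rewrite G0 addn0; congr (_ + G _); lia.
Qed.

Lemma K_rec n : 3 <= n ->
  2 * K n = \sum_(1 <= l < n) 'C(2 * n - 2, 2 * l - 1) * K l * K (n - l).
Proof.
move=> n3; set k := 2 * n - 3.
pose g c := F c * F (k.+1 - c).
have hK : K n = \sum_(b <- allbits k) g (count id b).+1.
  rewrite /K (_ : 2 * n - 1 = k.+2); last by rewrite /k; lia.
  rewrite F_rec; apply: eq_bigr => b _; by rewrite /g subSS.
have hT : \sum_(b <- allbits k.+1) g (count id b) = 2 * K n.
  rewrite /= big_cat !big_map /= mul2n -addnn; congr (_ + _); first by rewrite hK.
  rewrite -(sum_neg k (fun b => g (count id b))) hK big_seq [RHS]big_seq.
  apply: eq_bigr => b; rewrite mem_allbits => /eqP sb.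
  have cN : count id (map negb b) = k - count id b.
    by rewrite count_map -sb -(count_predC id b) addKn.
  have ck : count id b <= k by rewrite -sb count_size.
  rewrite cN /g mulnC; congr (F _ * F _); lia.
rewrite -hT sum_binom (_ : k.+2 = (2 * (n - 1)).+1); last by rewrite /k; lia.
rewrite sum_odd; last first.
  move=> i; rewrite /g F_even ?mul0n ?muln0 //.
  by rewrite oddM.
rewrite (_ : (n - 1).+1 = n); last by lia.
rewrite big_nat_cond [RHS]big_nat_cond; apply: eq_bigr => l /andP[/andP[l1 ln] _].
rewrite /g /K mulnA; congr ('C(_, _) * _ * F _); rewrite /k; lia.
Qed.

Lemma mask_perm (b : bitseq) (s : seq nat) : size b = size s ->
  perm_eq (mask b s ++ mask (map negb b) s) s.
Proof.
elim: s b => [|x s IH] [|c b] //= [e]; case: c => /=.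
  by rewrite perm_cons IH.
by rewrite -cat1s perm_catCA /= perm_cons IH.
Qed.

Lemma gen_node_mem m x y r t :
  t \in gen m.+1 [:: x, y & r] ->
  exists b l u, [/\ size b = size r, l \in gen m (mask (true :: b) (y :: r)),
     u \in gen m (mask (false :: map negb b) (y :: r)) & t = RNode x l u].
Proof.
move=> /flattenP [ts /mapP [b0 /mapP [b bin ->] ->]] /flattenP [ts' /mapP [l lin ->]] /mapP [u uin ->].
by exists b, l, u; split => //; move: bin; rewrite mem_allbits => /eqP.
Qed.

Lemma gen_props m s t : sorted ltn s -> t \in gen m s ->
  [/\ perm_eq (rlabels t) s, rincreasing t, canon_ok t, rlabel t = head 0 s
    & 2 * rleaves t = (size s).+1].
Proof.
elim: m s t => [|m IH] // [|x [|y r]] t //.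
  by move=> _ /=; rewrite inE => /eqP -> /=; rewrite perm_refl.
move=> srt0 /(@gen_node_mem m x y r t) [b [l [u [sb lin uin ->]]]].
have /andP[/allP xall srt] : all (ltn x) (y :: r) && sorted ltn (y :: r).
  by rewrite -(path_sortedE ltn_trans).
have /andP[/allP yall _] : all (ltn y) r && sorted ltn r.
  by rewrite -(path_sortedE ltn_trans).
have [pl il cl hl ll] := IH _ _ (sorted_mask ltn_trans _ srt) lin.
have [pu iu cu hu lu] := IH _ _ (sorted_mask ltn_trans _ srt) uin.
have mp := mask_perm (true :: b) (y :: r) (congr1 S sb).
have ul : rlabel u \in r.
  by move: (mem_rlabel u); rewrite (perm_mem pu) /= => /mem_mask.
have yl : rlabel l = y by rewrite hl.
split.
- rewrite perm_cons; apply: perm_trans mp; exact: perm_cat.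
- apply/and4P; split => //; rewrite ?yl; apply: xall; first by rewrite inE eqxx.
  by rewrite inE ul orbT.
- apply/and3P; split => //; rewrite yl; exact: yall.

- by [].
- have := perm_size mp; rewrite size_cat /= => e.
  rewrite mulnDr ll lu /=; lia.
Qed.

Lemma mask_inj (s : seq nat) (b b' : bitseq) : uniq s -> size b = size s -> size b' = size s ->
  mask b s = mask b' s -> b = b'.
Proof.
elim: s b b' => [|x s IH] [|c b] [|c' b'] //= /andP[xs us] [e] [e'].
case: c; case: c' => /= h.
- by case: h => /(IH _ _ us e e') ->.
- by move: xs; have /mem_mask -> : x \in mask b' s by rewrite -h mem_head.
- by move: xs; have /mem_mask -> : x \in mask b s by rewrite h mem_head.
- by rewrite (IH _ _ us e e' h).
Qed.

Lemma uniq_flatten_map (A : eqType) (B : eqType) (P : A -> seq B) (L : seq A) :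
  uniq L -> (forall a, a \in L -> uniq (P a)) ->
  (forall a a' z, a \in L -> a' \in L -> z \in P a -> z \in P a' -> a = a') ->
  uniq (flatten (map P L)).
Proof.
elim: L => [|a L IH] //= /andP[aL uL] uP dis.
rewrite cat_uniq uP ?mem_head // IH //; last first.
- by move=> x x' z xL x'L; apply: dis; rewrite inE ?xL ?x'L orbT.
- by move=> x xL; apply: uP; rewrite inE xL orbT.
rewrite andbT; apply/hasPn => z /flattenP [ts /mapP [a' a'L ->]] za'.
apply/negP => za.
have ea : a = a' by apply: (dis a a' z); rewrite ?inE ?eqxx ?a'L ?orbT.
by move: aL; rewrite ea a'L.
Qed.

Lemma gen_uniq m s : sorted ltn s -> uniq (gen m s).
Proof.
elim: m s => [|m IH] // [|x [|y r]] //.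
move=> srt0.
have srt : sorted ltn (y :: r).
  by have /andP[] : all (ltn x) (y :: r) && sorted ltn (y :: r) by rewrite -(path_sortedE ltn_trans).
have ur : uniq (y :: r) by apply: (sorted_uniq ltn_trans ltnn).
rewrite /=; apply: uniq_flatten_map.
- by rewrite map_inj_uniq ?uniq_allbits // => ? ? [].
- move=> b _; apply: uniq_flatten_map.
  + exact/IH/(sorted_mask ltn_trans).
  + move=> l _; rewrite map_inj_uniq; first exact/IH/(sorted_mask ltn_trans).
    by move=> ? ? [].
  + by move=> l l' z _ _ /mapP [? _ ->] /mapP [? _ []].
- move=> b b' z /mapP [c cin ->] /mapP [c' c'in ->].
  move=> /flattenP [ts /mapP [l lin ->]] /mapP [u uin ->].
  move=> /flattenP [ts' /mapP [l' l'in ->]] /mapP [u' u'in []] el _.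
  rewrite -{}el in l'in.
  have [pl _ _ _ _] := gen_props _ _ _ (sorted_mask ltn_trans _ srt) lin.
  have [pl' _ _ _ _] := gen_props _ _ _ (sorted_mask ltn_trans _ srt) l'in.
  have e : mask (true :: c) (y :: r) = mask (true :: c') (y :: r).
    apply: (irr_sorted_eq ltn_trans ltnn); try exact: (sorted_mask ltn_trans).
    by move=> z'; rewrite -(perm_mem pl) -(perm_mem pl').
  move: cin c'in; rewrite !mem_allbits => /eqP sc /eqP sc'.
  by rewrite (mask_inj _ _ _ ur _ _ e) //= ?sc ?sc'.
Qed.

Lemma gen_complete t : rincreasing t -> canon_ok t -> uniq (rlabels t) ->
  forall m s, sorted ltn s -> perm_eq (rlabels t) s -> size s <= m -> t \in gen m s.
Proof.
elim: t => [k|k l IHl r IHr].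
  move=> _ _ _ [|m] s srt p sm; first by move: sm; rewrite -(perm_size p).
  have := perm_size p; case: s srt p sm => [|y [|? ?]] //= _ p _ _.
  have : y \in [:: k] by rewrite (perm_mem p) mem_head.
  by rewrite inE => /eqP ->; rewrite inE.
move=> inc; have := inc; move=> /= /and4P[kl kr il ir] /and3P[lr cl cr].
rewrite /= cat_uniq => /andP[kn /and3P[ul dis ur]].
move=> [|m] s srt p sm; first by move: sm; rewrite -(perm_size p).
case: s srt p sm => [|y rest] srt p sm; first by have := perm_size p.
have yk : y = k.
  have ky : k <= y by apply: (rinc_min _ _ inc); rewrite (perm_mem p) mem_head.
  have : k \in y :: rest by rewrite -(perm_mem p) mem_head.
  rewrite inE => /orP[/eqP -> //|krest].
  have /andP[/allP yall _] : all (ltn y) rest && sorted ltn rest by rewrite -(path_sortedE ltn_trans).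
  by have := yall _ krest; rewrite /= ltnNge ky.
subst y; move: p; rewrite /= perm_cons => p.
have srest : sorted ltn rest.
  by have /andP[] : all (ltn k) rest && sorted ltn rest by rewrite -(path_sortedE ltn_trans).
case: rest srt p sm srest => [|y2 r2] srt p sm srest.
  by have := perm_mem p (rlabel l); rewrite mem_cat mem_rlabel.
pose a := fun z => z \in rlabels l.
have hy2 : a y2.
  have : y2 \in rlabels l ++ rlabels r by rewrite (perm_mem p) mem_head.
  rewrite mem_cat => /orP[//|y2r].
  have ry2 := rinc_min _ _ ir y2r.
  have : rlabel l \in y2 :: r2 by rewrite -(perm_mem p) mem_cat mem_rlabel.
  rewrite inE => /orP[/eqP e|lr2].
    by move: lr; rewrite e ltnNge ry2.
  have /andP[/allP y2all _] : all (ltn y2) r2 && sorted ltn r2 by rewrite -(path_sortedE ltn_trans).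
  by have := leq_trans (ltn_trans (y2all _ lr2) lr) ry2; rewrite ltnn.
set bb := map a r2.
have em : mask (true :: bb) (y2 :: r2) = filter a (y2 :: r2) by rewrite filter_mask /= hy2.
have em' : mask (map negb (true :: bb)) (y2 :: r2) = filter (predC a) (y2 :: r2).
  by rewrite filter_mask /= hy2 /bb -map_comp.
have fL : filter a (rlabels l) = rlabels l by apply/all_filterP; exact: allss.
have fR : filter a (rlabels r) = [::].
  by apply/eqP; move: dis; rewrite has_filter negbK.
have fL' : filter (predC a) (rlabels l) = [::].
  have : ~~ has (predC a) (rlabels l) by rewrite has_predC negbK; exact: allss.
  by rewrite has_filter negbK => /eqP.
have fR' : filter (predC a) (rlabels r) = rlabels r.
  by apply/all_filterP; rewrite all_predC.
have sz : forall q, size (filter q (y2 :: r2)) <= m.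
  by move=> q; rewrite size_filter; apply: leq_trans (count_size _ _) _; exact: sm.
rewrite /=; apply/flattenP; eexists.
  apply/mapP; exists (true :: bb) => //.
  by rewrite mem_cons_map eqxx mem_allbits size_map eqxx.
apply/allpairsP; exists (l, r); split => //.
  rewrite em; apply: IHl => //.
  - exact: (sorted_filter ltn_trans).
  - by have := perm_filter a p; rewrite filter_cat fL fR cats0.
rewrite em'; apply: IHr => //.
- exact: (sorted_filter ltn_trans).
- by have := perm_filter (predC a) p; rewrite filter_cat fL' fR'.
Qed.

Theorem proposition2 :
  exists K : nat -> nat,
    [/\ forall n, 1 <= n -> fh_count n (K n),
        K 1 = 1, K 2 = 1 &
        forall n, 3 <= n ->
          2 * K n = \sum_(1 <= l < n) 'C(2 * n - 2, 2 * l - 1) * K l * K (n - l)].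
Proof.
exists K; split; [|exact: K1|exact: K2|exact: K_rec].
move=> n n1; set s := iota 0 (2 * n - 1).
have srt : sorted ltn s by apply: iota_ltn_sorted.
exists (gen' s); split => //.
- move=> i hi; have tin := mem_nth (RLeaf 0) hi.
  have [pl il _ _ ll] := gen_props _ _ _ srt tin.
  split => //; move: ll; rewrite /s size_iota; move: (rleaves _) => x; lia.
- move=> i j hi hj iso.
  have [_ _ ci _ _] := gen_props _ _ _ srt (mem_nth (RLeaf 0) hi).
  have [_ _ cj _ _] := gen_props _ _ _ srt (mem_nth (RLeaf 0) hj).
  have e := canon_iso_eq _ _ iso ci cj.
  by apply/eqP; rewrite -(nth_uniq (RLeaf 0) hi hj (gen_uniq _ _ srt)) e.
- move=> t [lt pt it].
  have ut : uniq (rlabels t) by rewrite (perm_uniq pt) iota_uniq.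
  have tin : norm t \in gen' s.
    apply: gen_complete => //.
    + exact: norm_inc.
    + exact: norm_canon.
    + by rewrite (perm_uniq (norm_labels t)).
    + exact: perm_trans (norm_labels t) pt.
  exists (index (norm t) (gen' s)); first by rewrite index_mem.
  by rewrite nth_index //; apply: norm_iso.
Qed.
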